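(* Let $m\ge1$ and let $Z_l=\{z_{j,l}\}_{j=1}^m$, $l=1,2$, be two $m$-point subsets of the unit circle with no common points, labeled as $z_{j,l}=e^{ix_{j,l}}$ with $0\le x_{1,l}<x_{2,l}<\dots<x_{m,l}<2\pi$. For $k=1,\dots,m$ put $$\omega_k=\frac{\prod_{j=1}^m\sin\frac{x_{k,1}-x_{j,2}}{2}}{\prod_{j=1,\,j\ne k}^{m}\sin\frac{x_{k,1}-x_{j,1}}{2}}\quad(\ne 0).$$ Then $Z_1$ and $Z_2$ interlace if and only if all the numbers $\omega_1,\dots,\omega_m$ have the same sign.
   Context: Two disjoint $m$-point sets $Z_1,Z_2$ on the unit circle interlace if, with the labeling above and (after possibly swapping the roles of the sets) $x_{1,1}<x_{1,2}$, one has $x_{1,1}<x_{1,2}<x_{2,1}<x_{2,2}<\dots<x_{m,1}<x_{m,2}$; equivalently, each open arc between cyclically consecutive points of $Z_1$ contains exactly one point of $Z_2$. *)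

(* Defs.v *)
From Stdlib Require Import Reals Arith.
Open Scope R_scope.

Fixpoint prodR (n : nat) (f : nat -> R) : R :=
  match n with
  | O => 1
  | S n' => prodR n' f * f n'
  end.

(* A set of m points e^{i x_j}, j = 0..m-1, labeled increasingly with
   0 <= x_0 < x_1 < ... < x_{m-1} < 2*PI. *)
Definition labeled_angles (m : nat) (x : nat -> R) : Prop :=
  (forall j, (j < m)%nat -> 0 <= x j < 2 * PI) /\
  (forall j, (S j < m)%nat -> x j < x (S j)).

Definition interlace_chain (m : nat) (a b : nat -> R) : Prop :=
  forall j, (j < m)%nat -> a j < b j /\ ((S j < m)%nat -> b j < a (S j)).

Definition interlace (m : nat) (x1 x2 : nat -> R) : Prop :=
  interlace_chain m x1 x2 \/ interlace_chain m x2 x1.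

(* omega_k, with indices shifted to 0..m-1 *)
Definition omega (m : nat) (x1 x2 : nat -> R) (k : nat) : R :=
  prodR m (fun j => sin ((x1 k - x2 j) / 2)) /
  prodR m (fun j => if Nat.eqb j k then 1 else sin ((x1 k - x1 j) / 2)).

(* Main.v *)
Require Import Defs.
From Stdlib Require Import Reals Arith.
From Stdlib Require Import Lia Lra.
Open Scope R_scope.

Fixpoint cnt (n : nat) (p : nat -> bool) : nat :=
  match n with O => O | S n' => (cnt n' p + (if p n' then 1 else 0))%nat end.

Definition ltb (a b : R) : bool := if Rlt_dec a b then true else false.

Lemma ltb_true a b : ltb a b = true <-> a < b.
Proof. unfold ltb; destruct (Rlt_dec a b); split; intros; auto; try discriminate; contradiction. Qed.

Lemma ltb_false a b : ~ a < b -> ltb a b = false.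
Proof. unfold ltb; destruct (Rlt_dec a b); tauto. Qed.

Lemma cnt_ext n p q : (forall j, (j < n)%nat -> p j = q j) -> cnt n p = cnt n q.
Proof. induction n; simpl; intros H; auto. rewrite IHn by (intros; apply H; lia). rewrite H by lia. auto. Qed.

Lemma cnt_le n p : (cnt n p <= n)%nat.
Proof. induction n; simpl; auto. destruct (p n); lia. Qed.

Lemma cnt_mono n p q : (forall j, (j < n)%nat -> p j = true -> q j = true) -> (cnt n p <= cnt n q)%nat.
Proof. induction n; simpl; intros H; auto.
  assert (IH := IHn (fun j Hj => H j ltac:(lia))).
  specialize (H n ltac:(lia)). destruct (p n), (q n); try lia. Qed.

Lemma cnt_leb n k : cnt n (fun j => Nat.leb k j) = (n - k)%nat.
Proof. induction n; auto. cbn [cnt]. rewrite IHn. destruct (Nat.leb_spec k n); lia. Qed.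

Lemma cnt_seg n p : (forall j j', (j <= j')%nat -> (j' < n)%nat -> p j = true -> p j' = true) ->
  forall j, (j < n)%nat -> (p j = true <-> (n - cnt n p <= j)%nat).
Proof.
  induction n; intros Hup j Hj; [lia|]. cbn [cnt].
  destruct (p n) eqn:Pn.
  - assert (IH := IHn (fun a b Hab Hb => Hup a b Hab ltac:(lia))).
    destruct (Nat.eq_dec j n) as [->|Hne]. split; intros; auto; lia.
    rewrite (IH j ltac:(lia)). lia.
  - assert (Hz : forall j, (j < S n)%nat -> p j = false).
    { intros a Ha. destruct (p a) eqn:E; auto. rewrite <- Pn. symmetry. apply (Hup a n); auto; lia. }
    assert (cnt n p = 0%nat).
    { clear - Hz. assert (forall j, (j < n)%nat -> p j = false) by (intros; apply Hz; lia).
      clear Hz. induction n; simpl; auto. rewrite H by lia. rewrite IHn; auto. }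
    rewrite H, Hz by lia. split; intros; [discriminate | lia].
Qed.

Lemma prod_sign n f : (forall j, (j < n)%nat -> f j <> 0) ->
  0 < (-1) ^ (cnt n (fun j => ltb (f j) 0)) * prodR n f.
Proof.
  induction n; simpl; intros H. lra.
  rewrite pow_add.
  assert (IH := IHn (fun j Hj => H j ltac:(lia))).
  assert (Hn := H n ltac:(lia)).
  unfold ltb at 2. destruct (Rlt_dec (f n) 0).
  - replace ((-1) ^ cnt n (fun j => ltb (f j) 0) * (-1) ^ 1 * (prodR n f * f n))
      with (((-1) ^ cnt n (fun j => ltb (f j) 0) * prodR n f) * (- f n)) by (simpl; ring).
    apply Rmult_lt_0_compat; lra.
  - replace ((-1) ^ cnt n (fun j => ltb (f j) 0) * (-1) ^ 0 * (prodR n f * f n))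
      with (((-1) ^ cnt n (fun j => ltb (f j) 0) * prodR n f) * (f n)) by (simpl; ring).
    apply Rmult_lt_0_compat; lra.
Qed.

Lemma ratio a b N D : 0 < (-1) ^ a * N -> 0 < (-1) ^ b * D -> 0 < (-1) ^ (a + b) * (N / D).
Proof.
  intros HN HD. rewrite pow_add.
  assert (Hss : (-1) ^ b * (-1) ^ b = 1).
  { rewrite <- pow_add. replace (b + b)%nat with (2 * b)%nat by lia. apply pow_1_even. }
  assert (Hs : (-1) ^ b <> 0) by (intro E; rewrite E in Hss; lra).
  assert (HD0 : D <> 0) by (intro E; rewrite E in HD; lra).
  replace ((-1) ^ a * (-1) ^ b * (N / D)) with
    (((-1) ^ a * N) / ((-1) ^ b * D) * ((-1) ^ b * (-1) ^ b)) by (field; auto).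
  rewrite Hss, Rmult_1_r. apply Rdiv_lt_0_compat; auto.
Qed.

Lemma pm1 e : ((-1) ^ e = 1 /\ exists q, e = (2 * q)%nat) \/ ((-1) ^ e = -1 /\ exists q, e = (2 * q + 1)%nat).
Proof.
  destruct (Nat.Even_or_Odd e) as [[q ->]|[q ->]].
  - left; split; [apply pow_1_even | eauto].
  - right; split; [replace (2 * q + 1)%nat with (S (2 * q)) by lia; apply pow_1_odd | eauto].
Qed.

Lemma sin_half_sign a b : 0 <= a < 2 * PI -> 0 <= b < 2 * PI ->
  (a < b -> sin ((a - b) / 2) < 0) /\ (b < a -> 0 < sin ((a - b) / 2)).
Proof.
  intros Ha Hb. split; intro H.
  - apply sin_lt_0_var; lra.
  - apply sin_gt_0; lra.
Qed.

Lemma ltb_sin a b : 0 <= a < 2 * PI -> 0 <= b < 2 * PI -> a <> b ->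
  ltb (sin ((a - b) / 2)) 0 = ltb a b.
Proof.
  intros Ha Hb Hab. destruct (sin_half_sign a b Ha Hb) as [S1 S2].
  destruct (Rlt_dec a b).
  - rewrite (proj2 (ltb_true a b) r). apply ltb_true; auto.
  - rewrite (ltb_false a b n). apply ltb_false. assert (b < a) by lra. specialize (S2 H). lra.
Qed.

Lemma sin_nz a b : 0 <= a < 2 * PI -> 0 <= b < 2 * PI -> a <> b -> sin ((a - b) / 2) <> 0.
Proof.
  intros Ha Hb Hab. destruct (sin_half_sign a b Ha Hb) as [S1 S2].
  destruct (Rlt_dec a b). specialize (S1 r); lra. assert (b < a) by lra. specialize (S2 H); lra.
Qed.

Lemma mono m x : labeled_angles m x -> forall j j', (j < j')%nat -> (j' < m)%nat -> x j < x j'.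
Proof.
  intros [_ Hs] j j'. induction j'; intros H1 H2; [lia|].
  destruct (Nat.eq_dec j j') as [->|Hne]. apply Hs; auto.
  apply Rlt_trans with (x j'). apply IHj'; lia. apply Hs; auto.
Qed.

Lemma monole m x : labeled_angles m x -> forall j j', (j <= j')%nat -> (j' < m)%nat -> x j <= x j'.
Proof.
  intros L j j' H1 H2. destruct (Nat.eq_dec j j') as [->|]. lra.
  left; apply (mono m x L); lia.
Qed.

Lemma comb (G : nat -> nat) m r : (1 <= m)%nat -> (forall k, (k < m)%nat -> (G k <= m)%nat) ->
  (forall k, (S k < m)%nat -> (G (S k) <= G k)%nat) ->
  (forall k, (k < m)%nat -> exists q, (G k + (m - 1 - k) = 2 * q + r)%nat) ->
  (forall k, (k < m)%nat -> G k = (m - k)%nat) \/ (forall k, (k < m)%nat -> G k = (m - 1 - k)%nat).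
Proof.
  intros Hm H0 H1 H2.
  assert (step : forall k, (S k < m)%nat -> (G (S k) + 1 <= G k)%nat).
  { intros k Hk. destruct (H2 k) as [q Hq]; [lia|]. destruct (H2 (S k)) as [q' Hq']; auto.
    specialize (H1 k Hk). lia. }
  assert (chain : forall d k, (k + d < m)%nat -> (G (k + d) + d <= G k)%nat).
  { induction d; intros k Hk. rewrite !Nat.add_0_r; lia.
    specialize (IHd k ltac:(lia)). specialize (step (k + d)%nat ltac:(lia)).
    replace (k + S d)%nat with (S (k + d)) by lia. lia. }
  destruct (H2 0%nat) as [q0 Hq0]; [lia|]. destruct (H2 (m - 1)%nat) as [q1 Hq1]; [lia|].
  assert (C0 := chain (m - 1)%nat 0%nat ltac:(lia)). simpl in C0.
  assert (B0 := H0 0%nat ltac:(lia)).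
  destruct (Nat.eq_dec (G 0%nat) m) as [E|E]; [left|right]; intros k Hk;
  assert (Ck := chain k 0%nat ltac:(lia)); simpl in Ck;
  assert (Dk := chain (m - 1 - k)%nat k ltac:(lia));
  replace (k + (m - 1 - k))%nat with (m - 1)%nat in Dk by lia; lia.
Qed.

Theorem proposition3 (m : nat) (x1 x2 : nat -> R) :
  (1 <= m)%nat ->
  labeled_angles m x1 ->
  labeled_angles m x2 ->
  (forall j k, (j < m)%nat -> (k < m)%nat -> x1 j <> x2 k) ->
  (interlace m x1 x2 <->
   ((forall k, (k < m)%nat -> 0 < omega m x1 x2 k) \/
    (forall k, (k < m)%nat -> omega m x1 x2 k < 0))).
Proof.
  intros Hm L1 L2 Hd.
  pose proof L1 as [R1 S1]. pose proof L2 as [R2 S2].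
  set (G := fun k => cnt m (fun j => ltb (x1 k) (x2 j))).
  assert (Hsign : forall k, (k < m)%nat -> 0 < (-1) ^ (G k + (m - 1 - k)) * omega m x1 x2 k).
  { intros k Hk.
    assert (A : cnt m (fun j => ltb (sin ((x1 k - x2 j) / 2)) 0) = G k).
    { apply cnt_ext; intros j Hj. apply ltb_sin; auto. }
    assert (B : cnt m (fun j => ltb (if Nat.eqb j k then 1 else sin ((x1 k - x1 j) / 2)) 0)
                = (m - 1 - k)%nat).
    { replace (m - 1 - k)%nat with (m - S k)%nat by lia. rewrite <- cnt_leb.
      apply cnt_ext; intros j Hj. destruct (Nat.eqb_spec j k) as [->|Hne].
      - destruct (Nat.leb_spec (S k) k); [lia|]. apply ltb_false. lra.
      - rewrite ltb_sin; auto.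
        destruct (Nat.leb_spec (S k) j).
        + apply ltb_true. apply (mono m x1 L1); lia.
        + apply ltb_false. assert (x1 j < x1 k) by (apply (mono m x1 L1); lia). lra.
        + intro E. destruct (Nat.lt_total j k) as [h|[h|h]]; try lia.
          * assert (x1 j < x1 k) by (apply (mono m x1 L1); lia). lra.
          * assert (x1 k < x1 j) by (apply (mono m x1 L1); lia). lra. }
    unfold omega. rewrite <- A, <- B. apply ratio; apply prod_sign; intros j Hj.
    - apply sin_nz; auto.
    - destruct (Nat.eqb_spec j k) as [->|Hne]. lra. apply sin_nz; auto.
      intro E. destruct (Nat.lt_total j k) as [h|[h|h]]; try lia.
      * assert (x1 j < x1 k) by (apply (mono m x1 L1); lia). lra.
      * assert (x1 k < x1 j) by (apply (mono m x1 L1); lia). lra. }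
  assert (Hseg : forall k, (k < m)%nat -> forall j, (j < m)%nat ->
            (ltb (x1 k) (x2 j) = true <-> (m - G k <= j)%nat)).
  { intros k Hk. apply cnt_seg. intros a b Hab Hb Ha. apply ltb_true. apply ltb_true in Ha.
    assert (x2 a <= x2 b) by (apply (monole m x2 L2); lia). lra. }
  split.
  - intros [C|C].
    + assert (GK : forall k, (k < m)%nat -> G k = (m - k)%nat).
      { intros k Hk. unfold G. rewrite <- cnt_leb. apply cnt_ext; intros j Hj.
        destruct (Nat.leb_spec k j).
        - apply ltb_true. destruct (C k Hk) as [Ck _].
          assert (x2 k <= x2 j) by (apply (monole m x2 L2); lia). lra.
        - apply ltb_false. destruct (C j Hj) as [_ Cj]. specialize (Cj ltac:(lia)).
          assert (x1 (S j) <= x1 k) by (apply (monole m x1 L1); lia). lra. }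
      right. intros k Hk. specialize (Hsign k Hk). rewrite GK in Hsign by auto.
      replace (m - k + (m - 1 - k))%nat with (S (2 * (m - 1 - k))) in Hsign by lia.
      rewrite pow_1_odd in Hsign. lra.
    + assert (GK : forall k, (k < m)%nat -> G k = (m - 1 - k)%nat).
      { intros k Hk. unfold G. replace (m - 1 - k)%nat with (m - S k)%nat by lia.
        rewrite <- cnt_leb. apply cnt_ext; intros j Hj.
        destruct (Nat.leb_spec (S k) j).
        - apply ltb_true. destruct (C k Hk) as [_ Ck]. specialize (Ck ltac:(lia)).
          assert (x2 (S k) <= x2 j) by (apply (monole m x2 L2); lia). lra.
        - apply ltb_false. destruct (C j Hj) as [Cj _].
          assert (x1 j <= x1 k) by (apply (monole m x1 L1); lia). lra. }
      left. intros k Hk. specialize (Hsign k Hk). rewrite GK in Hsign by auto.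
      replace (m - 1 - k + (m - 1 - k))%nat with (2 * (m - 1 - k))%nat in Hsign by lia.
      rewrite pow_1_even in Hsign. lra.
  - intros HW.
    assert (Hb : forall k, (k < m)%nat -> (G k <= m)%nat) by (intros; apply cnt_le).
    assert (Hmo : forall k, (S k < m)%nat -> (G (S k) <= G k)%nat).
    { intros k Hk. apply cnt_mono. intros j Hj Hl. apply ltb_true in Hl; apply ltb_true.
      assert (x1 k < x1 (S k)) by (apply S1; auto). lra. }
    assert (HC : (forall k, (k < m)%nat -> G k = (m - k)%nat) \/
                 (forall k, (k < m)%nat -> G k = (m - 1 - k)%nat)).
    { destruct HW as [HW|HW].
      - apply (comb G m 0); auto. intros k Hk. specialize (Hsign k Hk). specialize (HW k Hk).
        destruct (pm1 (G k + (m - 1 - k))) as [[E [q Hq]]|[E [q Hq]]].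
        + exists q; lia.
        + rewrite E in Hsign. lra.
      - apply (comb G m 1); auto. intros k Hk. specialize (Hsign k Hk). specialize (HW k Hk).
        destruct (pm1 (G k + (m - 1 - k))) as [[E [q Hq]]|[E [q Hq]]].
        + rewrite E in Hsign. lra.
        + exists q; lia. }
    destruct HC as [GK|GK]; [left|right]; intros j Hj; split.
    + apply ltb_true. apply (Hseg j Hj j Hj). rewrite GK; lia.
    + intros Hs. assert (~ x1 (S j) < x2 j).
      { intro Hl. apply ltb_true in Hl. apply (Hseg (S j) Hs j Hj) in Hl. rewrite GK in Hl; lia. }
      specialize (Hd (S j) j Hs Hj). lra.
    + assert (~ x1 j < x2 j).
      { intro Hl. apply ltb_true in Hl. apply (Hseg j Hj j Hj) in Hl. rewrite GK in Hl; lia. }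
      specialize (Hd j j Hj Hj). lra.
    + intros Hs. apply ltb_true. apply (Hseg j Hj (S j) Hs). rewrite GK; lia.
Qed.
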